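(* Let $k\in\mathbb N$, let $I$ be an interval of length $|I|=b$, and let $g\in C^k(I,\mathbb R)$ satisfy $\|g^{(m)}\|_\infty\le c_m$ for $m=0,\dots,k$, where $c_0<1$. Let $\epsilon>0$ and assume $k\ge1/\epsilon$ and $b\le c_0^{\epsilon}$. Then there are constants $\tilde C_m(\epsilon)\ge0$, $m=0,\dots,k$, depending only on $\epsilon$ and on $c_1,\dots,c_k$ (and increasing in the $c_j$), but not on $b$ or $c_0$, such that $$\|g^{(m)}\|_\infty\le c_0\,\tilde C_m(\epsilon)\,b^{-m},\qquad m=0,\dots,k.$$
   Context: $\|\cdot\|_\infty$ is the supremum norm over $I$. *)

(* Defs.v *)
From Stdlib Require Import Reals.
From Coquelicot Require Import Coquelicot.
Open Scope R_scope.

Definition in_I (a b x : R) : Prop := a < x < a + b.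

Definition Ck_on (k : nat) (a b : R) (g : R -> R) : Prop :=
  (forall m x, (m <= k)%nat -> in_I a b x -> ex_derive_n g m x) /\
  (forall x, in_I a b x -> continuous (Derive_n g k) x).

Definition supnorm_le (a b : R) (h : R -> R) (c : R) : Prop :=
  forall x, in_I a b x -> Rabs (h x) <= c.

(* Main.v *)
Require Import Defs.
From Stdlib Require Import Reals Lra Lia.
From Coquelicot Require Import Coquelicot.
Open Scope R_scope.

Lemma Dn_shift f j : Derive_n (Derive f) j = Derive_n f (S j).
Proof. induction j; simpl; [reflexivity | rewrite IHj; reflexivity]. Qed.

Definition Dn a L f n := forall j x, (j < n)%nat -> in_I a L x -> ex_derive (Derive_n f j) x.
Definition Bd a L f n := forall j, (j <= n)%nat -> exists B, forall x, in_I a L x -> Rabs (Derive_n f j x) <= B.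

Lemma between_I a L u v c : in_I a L u -> in_I a L v -> Rmin u v <= c <= Rmax u v -> in_I a L c.
Proof.
  unfold in_I, Rmin, Rmax; intros; destruct (Rle_dec u v); lra.
Qed.

Lemma mvt_I a L F u v : (forall y, in_I a L y -> ex_derive F y) -> in_I a L u -> in_I a L v ->
  exists c, in_I a L c /\ Rmin u v <= c <= Rmax u v /\ F v - F u = Derive F c * (v - u).
Proof.
  intros H hu hv.
  destruct (MVT_gen F u v (Derive F)) as [c [Hc Heq]].
  - intros y Hy; apply Derive_correct; apply H; apply (between_I a L u v); auto; lra.
  - intros y Hy; apply continuity_pt_filterlim.
    assert (HyI : in_I a L y) by (apply (between_I a L u v); auto).
    exact (ex_derive_continuous F y (H y HyI)).
  - exists c; split; [apply (between_I a L u v); auto|]; auto.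
Qed.

Lemma abs_sub_le a b : Rabs (a - b) <= Rabs a + Rabs b.
Proof. unfold Rabs; repeat destruct Rcase_abs; lra. Qed.
Lemma abs_tri2 a b : Rabs b <= Rabs a + Rabs (a - b).
Proof. unfold Rabs; repeat destruct Rcase_abs; lra. Qed.
Lemma abs_between u v c : Rmin u v <= c <= Rmax u v -> Rabs (c - u) <= Rabs (v - u).
Proof. unfold Rmin, Rmax, Rabs; intros; destruct (Rle_dec u v); repeat destruct Rcase_abs; lra. Qed.

Lemma mvt_bound a L f P Q h x : 0 < h -> h <= L -> Dn a L f 2 ->
  (forall y, in_I a L y -> Rabs (f y) <= P) ->
  (forall y, in_I a L y -> Rabs (Derive_n f 2 y) <= Q) -> in_I a L x ->
  Rabs (Derive f x) <= 8 * P / h + h * Q.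
Proof.
  intros hh hL HD HP HQ hx.
  assert (Hd0 : forall y, in_I a L y -> ex_derive f y) by (intros y hy; exact (HD 0%nat y ltac:(lia) hy)).
  assert (Hd1 : forall y, in_I a L y -> ex_derive (Derive f) y) by (intros y hy; exact (HD 1%nat y ltac:(lia) hy)).
  assert (Hv : exists v, in_I a L v /\ Rabs (v - x) = h / 4).
  { unfold in_I in *. destruct (Rle_dec x (a + L/2)).
    - exists (x + h/4); split; [unfold in_I; lra|]; rewrite Rabs_pos_eq; lra.
    - exists (x - h/4); split; [unfold in_I; lra|]; rewrite Rabs_left; lra. }
  destruct Hv as [v [hv hvx]].
  destruct (mvt_I a L f x v Hd0 hx hv) as [c1 [hc1 [hb1 He1]]].
  destruct (mvt_I a L (Derive f) x c1 Hd1 hx hc1) as [c2 [hc2 [hb2 He2]]].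
  assert (E1 : Rabs (Derive f c1) * (h/4) <= 2 * P).
  { rewrite <- hvx, <- Rabs_mult, <- He1.
    pose proof (abs_sub_le (f v) (f x)); pose proof (HP v hv); pose proof (HP x hx); lra. }
  assert (E1' : Rabs (Derive f c1) <= 8 * P / h).
  { apply Rmult_le_reg_r with (h/4); [lra|].
    replace (8 * P / h * (h/4)) with (2 * P) by (field; lra). exact E1. }
  assert (E2 : Rabs (Derive f c1 - Derive f x) <= Q * (h/4)).
  { rewrite He2, Rabs_mult. apply Rmult_le_compat; try apply Rabs_pos.
    - exact (HQ c2 hc2).
    - rewrite <- hvx. apply abs_between. exact hb1. }
  pose proof (abs_tri2 (Derive f c1) (Derive f x)).
  pose proof (Rle_trans _ _ _ (Rabs_pos _) (HQ x hx)).
  nra.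
Qed.

Lemma absorb (S : R -> Prop) (F : R -> R) (beta B0 : R) :
  (forall x, S x -> Rabs (F x) <= B0) ->
  (forall B, (forall x, S x -> Rabs (F x) <= B) -> forall x, S x -> Rabs (F x) <= beta + B/2) ->
  forall x, S x -> Rabs (F x) <= 2*beta.
Proof.
  intros H0 Hs.
  assert (Hn: forall N x, S x -> Rabs (F x) <= 2*beta + (B0 - 2*beta) * (/2)^N).
  { induction N; intros x Hx.
    - simpl. specialize (H0 x Hx); lra.
    - specialize (Hs _ IHN x Hx). simpl.
      replace (2*beta + (B0-2*beta)*(/2 * (/2)^N)) with (beta + (2*beta + (B0-2*beta)*(/2)^N)/2) by field.
      exact Hs. }
  intros x Hx. destruct (Rle_or_lt (Rabs (F x)) (2*beta)) as [h|h]; auto. exfalso.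
  set (d := Rabs (F x) - 2*beta). set (e := Rabs (B0 - 2*beta)).
  assert (he : 0 <= e) by apply Rabs_pos.
  assert (hd : 0 < d / (e+1)) by (apply Rdiv_lt_0_compat; unfold d; lra).
  destruct (pow_lt_1_zero (/2) ltac:(rewrite Rabs_pos_eq; lra) (d/(e+1)) hd) as [N HN].
  specialize (HN N (Nat.le_refl N)). specialize (Hn N x Hx).
  assert (T1 : (B0 - 2*beta)*(/2)^N <= e * Rabs ((/2)^N)).
  { apply Rle_trans with (Rabs ((B0 - 2*beta)*(/2)^N)); [apply Rle_abs | rewrite Rabs_mult; unfold e; lra]. }
  assert (T2 : (e+1) * (d/(e+1)) = d) by (field; lra).
  pose proof (Rabs_pos ((/2)^N)).
  assert (e * Rabs ((/2)^N) < d) by nra.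
  unfold d in *; lra.
Qed.

Definition Claim (n : nat) : Prop := exists A : nat -> R, (forall j, 0 <= A j) /\
  forall a L f P Q h, 0 < h -> h <= L -> Dn a L f n -> Bd a L f n ->
  (forall x, in_I a L x -> Rabs (f x) <= P) ->
  (forall x, in_I a L x -> Rabs (Derive_n f n x) <= Q) ->
  forall j x, (j <= n)%nat -> in_I a L x ->
    Rabs (Derive_n f j x) <= A j * (P / h ^ j + h ^ (n - j) * Q).

Lemma nonneg_PQ a L f n P Q h : 0 < h -> h <= L ->
  (forall x, in_I a L x -> Rabs (f x) <= P) ->
  (forall x, in_I a L x -> Rabs (Derive_n f n x) <= Q) -> 0 <= P /\ 0 <= Q.
Proof.
  intros hh hL HP HQ. assert (hx : in_I a L (a + L/2)) by (unfold in_I; lra).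
  pose proof (HP _ hx); pose proof (HQ _ hx);
  pose proof (Rabs_pos (f (a + L/2))); pose proof (Rabs_pos (Derive_n f n (a + L/2))); lra.
Qed.

Lemma claim1 : Claim 1.
Proof.
  exists (fun _ => 1). split; [intros; lra|].
  intros a L f P Q h hh hL HD HB HP HQ j x hj hx.
  destruct (nonneg_PQ a L f 1 P Q h hh hL HP HQ) as [hP hQ].
  assert (0 <= P / h) by (apply Rdiv_le_0_compat; lra).
  destruct j as [|[|j]]; [| |lia].
  - change (Derive_n f 0 x) with (f x). simpl. specialize (HP x hx).
    assert (0 <= h * 1 * Q) by (apply Rmult_le_pos; lra).
    replace (P / 1) with P by field. lra.
  - specialize (HQ x hx). simpl. simpl in HQ. rewrite Rmult_1_r. lra.
Qed.

Lemma claim2 : Claim 2.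
Proof.
  exists (fun j => match j with 1%nat => 8 | _ => 1 end). split; [intros [|[|]]; lra|].
  intros a L f P Q h hh hL HD HB HP HQ j x hj hx.
  destruct (nonneg_PQ a L f 2 P Q h hh hL HP HQ) as [hP hQ].
  assert (0 <= P / h) by (apply Rdiv_le_0_compat; lra).
  assert (0 < h^2) by (apply pow_lt; lra).
  assert (0 <= P / h^2) by (apply Rdiv_le_0_compat; lra).
  destruct j as [|[|[|j]]]; [| | |lia].
  - change (Derive_n f 0 x) with (f x). specialize (HP x hx).
    assert (0 <= h ^ (2 - 0) * Q) by (apply Rmult_le_pos; [apply pow_le|]; lra).
    replace (P / h ^ 0) with P by (simpl; field). lra.
  - change (Derive_n f 1 x) with (Derive f x).
    pose proof (mvt_bound a L f P Q h x hh hL HD HP HQ hx).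
    replace (h ^ 1) with h by ring. replace (h ^ (2 - 1)) with h by (simpl; ring).
    replace (8 * P / h) with (8 * (P / h)) in H2 by (field; lra).
    assert (0 <= h * Q) by (apply Rmult_le_pos; lra). lra.
  - specialize (HQ x hx). replace (h ^ (2 - 2)) with 1 by (simpl; ring). lra.
Qed.

Lemma claim_step m : Claim (S (S m)) -> Claim (S (S (S m))).
Proof.
  intros [A [HA0 HA]].
  set (A1 := A 1%nat). set (An := A (S m)). set (K := A1 * An).
  assert (hK : 0 <= K) by (apply Rmult_le_pos; apply HA0).
  set (dl := / (1 + 2 * K)).
  assert (hdl : 0 < dl) by (apply Rinv_0_lt_compat; lra).
  assert (hdl1 : dl * (1 + 2*K) = 1) by (unfold dl; field; lra).
  assert (hdl2 : dl <= 1) by nra.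
  assert (hA1 : 0 <= A1) by apply HA0.
  set (z := 2 * A1 / dl).
  assert (hz : 0 <= z) by (apply Rdiv_le_0_compat; lra).
  exists (fun j => match j with 0%nat => 1 | 1%nat => z + 1 | S j' => A j' * (z + 2) end).
  split.
  { intros [|[|j]]; try lra. apply Rmult_le_pos; [apply HA0|lra]. }
  intros a L f P Q h hh hL HD HB HP HQ.
  destruct (nonneg_PQ a L f _ P Q h hh hL HP HQ) as [hP hQ].
  set (n := S (S m)). set (f1 := Derive f).
  assert (HD1 : Dn a L f1 n) by (intros j y hj hy; unfold f1; rewrite Dn_shift; apply HD; [unfold n in *; lia|exact hy]).
  assert (HB1 : Bd a L f1 n) by (intros j hj; unfold f1; rewrite Dn_shift; apply HB; unfold n in *; lia).
  assert (HD0 : Dn a L f n) by (intros j y hj hy; apply HD; [unfold n in *; lia|exact hy]).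
  assert (HB0 : Bd a L f n) by (intros j hj; apply HB; unfold n in *; lia).
  assert (HQ1 : forall x, in_I a L x -> Rabs (Derive_n f1 n x) <= Q)
    by (intros x hx; unfold f1; rewrite Dn_shift; apply HQ; auto).
  set (beta := A1 * P / (dl * h) + h ^ n * Q / 2).
  assert (Hkey : forall B, (forall x, in_I a L x -> Rabs (f1 x) <= B) ->
                  forall x, in_I a L x -> Rabs (f1 x) <= beta + B/2).
  { intros B HBnd x hx.
    assert (hB : 0 <= B) by (pose proof (HBnd x hx); pose proof (Rabs_pos (f1 x)); lra).
    assert (HR : forall y, in_I a L y -> Rabs (Derive_n f n y) <= An * (B / h ^ (S m) + h * Q)).
    { intros y hy.
      pose proof (HA a L f1 B Q h hh hL HD1 HB1 HBnd HQ1 (S m) y ltac:(unfold n; lia) hy) as T.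
      unfold f1 in T; rewrite Dn_shift in T.
      replace (S (S m) - S m)%nat with 1%nat in T by lia. rewrite pow_1 in T. exact T. }
    assert (hdh : 0 < dl * h) by nra.
    pose proof (HA a L f P (An * (B / h ^ (S m) + h * Q)) (dl * h) hdh ltac:(nra) HD0 HB0 HP HR
                 1%nat x ltac:(unfold n; lia) hx) as T.
    change (Derive_n f 1 x) with (f1 x) in T.
    replace (S (S m) - 1)%nat with (S m) in T by lia.
    rewrite pow_1, Rpow_mult_distr in T.
    fold A1 in T.
    set (X := dl ^ S m) in *. set (H := h ^ S m) in *.
    assert (hH : 0 < H) by (apply pow_lt; lra).
    assert (hX0 : 0 <= X) by (apply pow_le; lra).
    assert (hX : X <= dl).
    { unfold X; simpl. assert (dl ^ m <= 1) by (rewrite <- (pow1 m); apply pow_incr; lra). nra. }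
    assert (hKX : K * X <= 1/2) by nra.
    assert (Eq : A1 * (P / (dl * h) + X * H * (An * (B / H + h * Q)))
                 = A1 * P / (dl * h) + K * X * B + K * X * (h * H * Q)).
    { unfold K; field; lra. }
    rewrite Eq in T. unfold beta.
    change (h ^ n) with (h * H).
    assert (0 <= h * H * Q) by (apply Rmult_le_pos; [nra|lra]).
    assert (0 <= K * X) by nra.
    nra. }
  destruct (HB 1%nat ltac:(lia)) as [B0 HB0'].
  pose proof (absorb (in_I a L) f1 beta B0 HB0' Hkey) as Habs.
  intros j x hj hx.
  assert (hn : 0 <= h ^ n * Q) by (apply Rmult_le_pos; [apply pow_le|]; lra).
  destruct j as [|[|j']].
  - change (Derive_n f 0 x) with (f x). specialize (HP x hx).
    assert (0 <= h ^ (S n - 0) * Q) by (apply Rmult_le_pos; [apply pow_le|]; lra).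
    replace (P / h ^ 0) with P by (simpl; field). lra.
  - change (Derive_n f 1 x) with (f1 x). specialize (Habs x hx).
    replace (S n - 1)%nat with n by lia. rewrite pow_1.
    unfold beta in Habs.
    replace (A1 * P / (dl * h)) with (z / 2 * (P / h)) in Habs by (unfold z; field; lra).
    assert (0 <= P / h) by (apply Rdiv_le_0_compat; lra).
    assert (0 <= z * (h ^ n * Q)) by nra.
    nra.
  - assert (hj' : (S j' <= n)%nat) by (unfold n in *; lia).
    pose proof (HA a L f1 (2 * beta) Q h hh hL HD1 HB1 Habs HQ1 (S j') x hj' hx) as T.
    unfold f1 in T; rewrite Dn_shift in T.
    set (r := (S (S m) - S j')%nat) in T.
    replace (S n - S (S j'))%nat with r by (unfold r; lia).
    assert (hpn : h ^ n = h ^ r * h ^ S j') by (rewrite <- pow_add; f_equal; unfold r; lia).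
    assert (hp : 0 < h ^ S j') by (apply pow_lt; lra).
    assert (Eq : 2 * beta / h ^ S j' + h ^ r * Q = z * (P / h ^ S (S j')) + 2 * (h ^ r * Q)).
    { unfold beta, z. rewrite hpn. change (h ^ S (S j')) with (h * h ^ S j'). field. split; lra. }
    rewrite Eq in T.
    assert (0 <= P / h ^ S (S j')) by (apply Rdiv_le_0_compat; [lra| apply pow_lt; lra]).
    assert (0 <= h ^ r * Q) by (apply Rmult_le_pos; [apply pow_le|]; lra).
    pose proof (HA0 (S j')).
    apply (Rle_trans _ _ _ T).
    rewrite Rmult_assoc. apply Rmult_le_compat_l; [auto|]. nra.
Qed.

Lemma claim_all n : (1 <= n)%nat -> Claim n.
Proof.
  intros hn. destruct n as [|[|m]]; [lia|apply claim1|].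
  clear hn. induction m; [apply claim2|apply claim_step; auto].
Qed.

Lemma bk_le k eps c0 b : 0 < eps -> 1 / eps <= INR k -> 0 < c0 < 1 -> 0 < b ->
  b <= Rpower c0 eps -> b ^ k <= c0.
Proof.
  intros he hk hc hb hbc.
  apply Rle_trans with ((Rpower c0 eps) ^ k); [apply pow_incr; lra|].
  rewrite <- Rpower_pow by (unfold Rpower; apply exp_pos).
  rewrite Rpower_mult.
  rewrite <- (Rpower_1 c0) at 2 by lra.
  unfold Rpower.
  assert (hl : ln c0 < 0) by (rewrite <- ln_1; apply ln_increasing; lra).
  assert (hek : 1 <= eps * INR k).
  { replace 1 with (eps * (1/eps)) by (field; lra). apply Rmult_le_compat_l; lra. }
  assert (eps * INR k * ln c0 <= 1 * ln c0) by nra.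
  destruct (Rle_lt_or_eq_dec _ _ H) as [H'|H']; [left; apply exp_increasing; auto| rewrite H'; lra].
Qed.

Theorem lemma2p4 (k : nat) (eps : R) :
  0 < eps -> 1 / eps <= INR k ->
  exists Ct : (nat -> R) -> nat -> R,
    (forall c m, 0 <= Ct c m) /\
    (forall c c', (forall j, (1 <= j <= k)%nat -> c j <= c' j) ->
        forall m, (m <= k)%nat -> Ct c m <= Ct c' m) /\
    (forall (c : nat -> R) (a b : R) (g : R -> R),
        c 0%nat < 1 -> 0 < b -> b <= Rpower (c 0%nat) eps ->
        Ck_on k a b g ->
        (forall m, (m <= k)%nat -> supnorm_le a b (Derive_n g m) (c m)) ->
        forall m, (m <= k)%nat ->
          supnorm_le a b (Derive_n g m) (c 0%nat * Ct c m * / b ^ m)).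
Proof.
  intros he hk.
  assert (hk1 : (1 <= k)%nat).
  { destruct k; [|lia]. simpl in hk. assert (0 < 1/eps) by (apply Rdiv_lt_0_compat; lra). lra. }
  destruct (claim_all k hk1) as [A [HA0 HA]].
  exists (fun c m => A m * (1 + Rmax 0 (c k))).
  split; [|split].
  - intros c m. apply Rmult_le_pos; [apply HA0|]. pose proof (Rmax_l 0 (c k)); lra.
  - intros c c' Hc m hm. apply Rmult_le_compat_l; [apply HA0|].
    specialize (Hc k ltac:(lia)). unfold Rmax; destruct (Rle_dec 0 (c k)); destruct (Rle_dec 0 (c' k)); lra.
  - intros c a b g hc0 hb hbc [HDk Hcont] Hbd m hm x hx.
    assert (hx0 : in_I a b x) by exact hx.
    pose proof (Hbd 0%nat ltac:(lia) x hx) as H0. simpl in H0.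
    pose proof (Rabs_pos (g x)).
    destruct (Rle_lt_or_eq_dec 0 (c 0%nat) ltac:(lra)) as [hpos|hzero].
    + assert (HDn : Dn a b g k) by (intros j y hj hy; exact (HDk (S j) y hj hy)).
      assert (HBd : Bd a b g k) by (intros j hj; exists (c j); apply Hbd; auto).
      pose proof (HA a b g (c 0%nat) (c k) b hb (Rle_refl b) HDn HBd
                    (Hbd 0%nat ltac:(lia)) (Hbd k (Nat.le_refl k)) m x hm hx) as T.
      pose proof (bk_le k eps (c 0%nat) b he hk ltac:(lra) hb hbc) as Hbk.
      set (R0 := Rmax 0 (c k)).
      assert (hR1 : c k <= R0) by apply Rmax_r.
      assert (hR0 : 0 <= R0) by apply Rmax_l.
      assert (hbm : 0 < b ^ m) by (apply pow_lt; lra).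
      assert (hbkm0 : 0 <= b ^ (k - m)) by (apply pow_le; lra).
      assert (hbkm : b ^ (k - m) <= c 0%nat / b ^ m).
      { apply Rmult_le_reg_r with (b ^ m); auto.
        rewrite <- pow_add. replace (k - m + m)%nat with k by lia.
        replace (c 0%nat / b ^ m * b ^ m) with (c 0%nat) by (field; lra). exact Hbk. }
      apply (Rle_trans _ _ _ T).
      apply Rle_trans with (A m * (c 0%nat / b ^ m + c 0%nat / b ^ m * R0)).
      * apply Rmult_le_compat_l; [apply HA0|].
        assert (b ^ (k - m) * c k <= b ^ (k - m) * R0) by (apply Rmult_le_compat_l; auto).
        assert (b ^ (k - m) * R0 <= c 0%nat / b ^ m * R0) by (apply Rmult_le_compat_r; auto).
        lra.
      * right. field. lra.
    + assert (Hg0 : forall t, in_I a b t -> g t = 0).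
      { intros t ht. pose proof (Hbd 0%nat ltac:(lia) t ht) as Ht. simpl in Ht.
        rewrite <- hzero in Ht. revert Ht. unfold Rabs; destruct Rcase_abs; lra. }
      assert (HD : Derive_n g m x = Derive_n (fun _ => 0) m x).
      { apply Derive_n_ext_loc.
        apply (filter_imp (fun u => a < u /\ u < a + b)).
        - intros u hu. apply Hg0. exact hu.
        - apply (open_and _ _ (open_gt a) (open_lt (a+b))). exact hx. }
      rewrite HD. destruct m as [|m']; [simpl | rewrite Derive_n_const];
        rewrite Rabs_R0, <- hzero; right; ring.
Qed.
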